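(* Let $G$ be a finite connected graph that is either non-bipartite or contains a node of degree larger than two. Then for every $k$ with $2\le k<|V|$, the $k$-node CIS relationship graph $G^{(k)}$ is non-bipartite.
   Context: Let $G=(V,E,L)$ be a finite undirected graph with node set $V$, edge set $E$ (unordered pairs of distinct nodes) and a set $L$ of edge labels (labels play no role here). For $V'\subseteq V$, the induced subgraph on $V'$ has node set $V'$ and edge set $\{(i,j)\in E: i,j\in V'\}$. A $k$-node CIS (connected induced subgraph) is an induced subgraph on a $k$-element set $V'\subseteq V$ that is connected; $C^{(k)}$ denotes the set of all $k$-node CISes of $G$. The $k$-node CIS relationship graph $G^{(k)}=(C^{(k)},R^{(k)})$ is the simple undirected graph whose nodes are the elements of $C^{(k)}$, where two distinct CISes $s_1,s_2\in C^{(k)}$ are adjacent iff their node sets share exactly $k-1$ nodes. *)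

(* Defs.v *)
From mathcomp Require Import all_boot.
Set Implicit Arguments. Unset Strict Implicit. Unset Printing Implicit Defensive.

(* A finite simple undirected graph: node set T (a finType), edge relation e
   that is symmetric and irreflexive. Edge labels play no role and are omitted. *)
Definition simple_graph (T : finType) (e : rel T) : Prop :=
  symmetric e /\ irreflexive e.

Definition connected_graph (T : finType) (e : rel T) : Prop :=
  forall x y : T, connect e x y.

Definition degree (T : finType) (e : rel T) (x : T) : nat := #|[set y | e x y]|.

Definition bipartite_on (T : finType) (V : pred T) (r : rel T) : Prop :=
  exists f : T -> bool,
    forall x y, x \in V -> y \in V -> r x y -> f x != f y.

Definition bipartite (T : finType) (e : rel T) : Prop := bipartite_on predT e.

Definition induced_rel (T : finType) (e : rel T) (S : {set T}) : rel T :=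
  fun x y => [&& x \in S, y \in S & e x y].

Definition induced_connected (T : finType) (e : rel T) (S : {set T}) : bool :=
  [forall x in S, forall y in S, connect (induced_rel e S) x y].

Definition is_CIS (T : finType) (e : rel T) (k : nat) (S : {set T}) : bool :=
  (#|S| == k) && induced_connected e S.

Definition CIS_adj (T : finType) (e : rel T) (k : nat) : rel {set T} :=
  fun S1 S2 => [&& is_CIS e k S1, is_CIS e k S2, S1 != S2 & #|S1 :&: S2| == k.-1].

Definition CIS_graph_bipartite (T : finType) (e : rel T) (k : nat) : Prop :=
  bipartite_on (fun S : {set T} => is_CIS e k S) (CIS_adj e k).

(* Main.v *)
Require Import Defs.
From mathcomp Require Import all_boot zify.
Set Implicit Arguments. Unset Strict Implicit. Unset Printing Implicit Defensive.

Lemma induced_sym (T : finType) (e : rel T) (S : {set T}) :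
  symmetric e -> symmetric (induced_rel e S).
Proof.
move=> se x y; rewrite /induced_rel se.
by case: (x \in S); case: (y \in S).
Qed.

Lemma conn_add (T : finType) (e : rel T) (S : {set T}) (x y : T) :
  symmetric e -> induced_connected e S -> x \in S -> e x y ->
  induced_connected e (y |: S).
Proof.
move=> se cS xS exy.
have sub: forall a b, connect (induced_rel e S) a b -> connect (induced_rel e (y |: S)) a b.
  apply: connect_sub => a b /and3P [aS bS eab].
  by apply: connect1; rewrite /induced_rel !inE aS bS eab !orbT.
have cxy : connect (induced_rel e (y |: S)) x y.
  by apply: connect1; rewrite /induced_rel !inE xS exy eqxx !orbT.
have cyx : connect (induced_rel e (y |: S)) y x.
  by apply: connect1; rewrite /induced_rel !inE xS se exy eqxx !orbT.
have cS' : forall a, a \in S -> connect (induced_rel e (y |: S)) x a.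
  by move=> a aS; apply: sub; move/forall_inP: cS => /(_ x xS)/forall_inP; apply.
have cS'' : forall a, a \in S -> connect (induced_rel e (y |: S)) a x.
  by move=> a aS; apply: sub; move/forall_inP: cS => /(_ a aS)/forall_inP; apply.
apply/forall_inP => a; rewrite in_setU1 => /orP [/eqP -> | aS];
  apply/forall_inP => b; rewrite in_setU1 => /orP [/eqP -> | bS].
- exact: connect0.
- exact: connect_trans cyx (cS' b bS).
- exact: connect_trans (cS'' a aS) cxy.
- exact: connect_trans (cS'' a aS) (cS' b bS).
Qed.

Lemma conn1 (T : finType) (e : rel T) (v : T) : induced_connected e [set v].
Proof.
apply/forall_inP => a; rewrite inE => /eqP ->; apply/forall_inP => b.
by rewrite inE => /eqP ->; apply: connect0.
Qed.

Lemma boundary (T : finType) (e : rel T) (S : {set T}) x y :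
  connect e x y -> x \in S -> y \notin S ->
  exists u w, [/\ u \in S, w \notin S & e u w].
Proof.
move/connectP => [p pth ->]; elim: p x pth => [|z p IH] x /=.
  by move=> _ ->.
move=> /andP [exz pth] xS yn.
case zS: (z \in S).
  exact: IH pth zS yn.
by exists x, z; rewrite zS.
Qed.

Lemma deg3 (T : finType) (e : rel T) x a b c :
  e x a -> e x b -> e x c -> a != b -> a != c -> b != c -> 2 < degree e x.
Proof.
move=> ea eb ec ab ac bc; rewrite /degree.
have -> : 3 = #|[set a; b; c]|.
  rewrite cardsU cards2 cards1 ab /=.
  have -> : [set a; b] :&: [set c] = set0.
    apply/setP => z; rewrite !inE; case: (z =P c) => [->|]; rewrite ?andbF //.
    by rewrite andbT ![c == _]eq_sym (negbTE ac) (negbTE bc).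
  by rewrite cards0.
by apply: subset_leq_card; apply/subsetP => z; rewrite !inE => /orP [/orP [] |] /eqP ->.
Qed.


Lemma triangle (T : finType) (e : rel T) (k : nat) (A B C : {set T}) :
  is_CIS e k A -> is_CIS e k B -> is_CIS e k C ->
  A != B -> A != C -> B != C ->
  #|A :&: B| = k.-1 -> #|A :&: C| = k.-1 -> #|B :&: C| = k.-1 ->
  ~ CIS_graph_bipartite e k.
Proof.
move=> cA cB cC nAB nAC nBC iAB iAC iBC [f Hf].
have hAB : f A != f B by apply: Hf; rewrite ?unfold_in //= /CIS_adj cA cB nAB iAB eqxx.
have hAC : f A != f C by apply: Hf; rewrite ?unfold_in //= /CIS_adj cA cC nAC iAC eqxx.
have hBC : f B != f C by apply: Hf; rewrite ?unfold_in //= /CIS_adj cC cB nBC iBC eqxx.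
by move: hAB hAC hBC; case: (f A); case: (f B); case: (f C).
Qed.

Lemma interD1 (T : finType) (U : {set T}) x1 x2 :
  x1 \in U -> x2 \in U -> x1 != x2 -> #|(U :\ x1) :&: (U :\ x2)| = #|U|.-2.
Proof.
move=> h1 h2 n12.
have -> : (U :\ x1) :&: (U :\ x2) = (U :\ x1) :\ x2.
  by apply/setP => z; rewrite !inE; case: (z == x1); case: (z == x2); case: (z \in U).
have e2 : x2 \in U :\ x1 by rewrite !inE eq_sym n12 h2.
by rewrite [in RHS](cardsD1 x1 U) h1 [in RHS](cardsD1 x2 (U :\ x1)) e2.
Qed.

Inductive good3 (T : finType) (e : rel T) (U : {set T}) (x1 x2 x3 : T) : Prop :=
  Good3 of induced_connected e U & x1 \in U & x2 \in U & x3 \in U &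
    x1 != x2 & x1 != x3 & x2 != x3 &
    induced_connected e (U :\ x1) & induced_connected e (U :\ x2) &
    induced_connected e (U :\ x3).

Lemma good3_tri (T : finType) (e : rel T) (k : nat) (U : {set T}) x1 x2 x3 :
  #|U| = k.+1 -> good3 e U x1 x2 x3 -> ~ CIS_graph_bipartite e k.
Proof.
move=> cU [_ i1 i2 i3 n12 n13 n23 c1 c2 c3].
have cd : forall x, x \in U -> induced_connected e (U :\ x) -> is_CIS e k (U :\ x).
  move=> x xU c; rewrite /is_CIS c andbT.
  by apply/eqP; have := cardsD1 x U; rewrite xU cU /=; lia.
have ne : forall x y, x \in U -> x != y -> U :\ x != U :\ y.
  move=> x y xU nxy; apply/negP => /eqP E.
  have : x \in U :\ y by rewrite !inE nxy xU.
  by rewrite -E !inE eqxx.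
apply: (triangle (cd _ i1 c1) (cd _ i2 c2) (cd _ i3 c3)).
- exact: ne.
- exact: ne.
- exact: ne.
- by rewrite interD1 // cU.
- by rewrite interD1 // cU.
- by rewrite interD1 // cU.
Qed.


Lemma step_one (T : finType) (e : rel T) (U : {set T}) x y z :
  symmetric e -> induced_connected e U -> z \in U ->
  induced_connected e (U :\ z) -> y \notin U -> x \in U -> e x y ->
  (if z == x then y else z) \in y |: U /\
  induced_connected e ((y |: U) :\ (if z == x then y else z)).
Proof.
move=> se cU zU cz yU xU exy.
have [zx|nzx] := eqVneq z x.
  by rewrite setU1K // !inE eqxx.

split; first by rewrite !inE zU orbT.
have -> : (y |: U) :\ z = y |: (U :\ z).
  have yz : y != z by apply/eqP => E; rewrite E zU in yU.
  apply/setP => w; rewrite !inE.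
  case: (w =P y) => [->|]; last by [].
  by rewrite yz.
apply: conn_add cz _ exy => //.
by rewrite !inE xU andbT eq_sym.
Qed.

Lemma step_dist (T : finType) (U : {set T}) x y z1 z2 :
  z1 \in U -> z2 \in U -> z1 != z2 -> y \notin U ->
  (if z1 == x then y else z1) != (if z2 == x then y else z2).
Proof.
move=> h1 h2 n12 yU.
have [e1|e1] := eqVneq z1 x; have [e2|e2] := eqVneq z2 x.
- by rewrite e1 e2 eqxx in n12.
- by apply/eqP => E; rewrite E h2 in yU.
- by apply/eqP => E; rewrite -E h1 in yU.
- by [].
Qed.

Lemma good3_step (T : finType) (e : rel T) (U : {set T}) x1 x2 x3 x y :
  symmetric e -> good3 e U x1 x2 x3 -> y \notin U -> x \in U -> e x y ->
  exists y1 y2 y3, good3 e (y |: U) y1 y2 y3.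
Proof.
move=> se [cU i1 i2 i3 n12 n13 n23 c1 c2 c3] yU xU exy.
have [a1 b1] := step_one se cU i1 c1 yU xU exy.
have [a2 b2] := step_one se cU i2 c2 yU xU exy.
have [a3 b3] := step_one se cU i3 c3 yU xU exy.
exists (if x1 == x then y else x1), (if x2 == x then y else x2),
  (if x3 == x then y else x3).
constructor => //; try exact: (step_dist _ _ _ _ yU).
all: try exact: conn_add cU xU exy.
Qed.

Lemma good3_base (T : finType) (e : rel T) v a b c :
  symmetric e -> irreflexive e -> e v a -> e v b -> e v c ->
  a != b -> a != c -> b != c ->
  #|a |: (b |: (c |: [set v]))| = 4 /\ good3 e (a |: (b |: (c |: [set v]))) a b c.
Proof.
move=> se ir ea eb ec ab ac bc.
have nv : forall w, e v w -> w != v.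
  by move=> w ew; apply/eqP => E; rewrite E ir in ew.
have va := nv _ ea; have vb := nv _ eb; have vc := nv _ ec.
have cv := conn1 e v.
have vin : forall S : {set T}, v \in S -> forall w, v \in w |: S.
  by move=> S vS w; rewrite !inE vS orbT.
have v1 : v \in [set v] by rewrite inE.
have c_c := conn_add se cv v1 ec.
have c_bc := conn_add se c_c (vin _ v1 c) eb.
have c_abc := conn_add se c_bc (vin _ (vin _ v1 c) b) ea.
have c_b := conn_add se cv v1 eb.
have c_ab := conn_add se c_b (vin _ v1 b) ea.
have c_cab := conn_add se c_ab (vin _ (vin _ v1 b) a) ec.
have c_ac := conn_add se c_c (vin _ v1 c) ea.
split.
  rewrite !cardsU1 cards1 !inE.
  by rewrite (negbTE ab) (negbTE ac) (negbTE bc) (negbTE va) (negbTE vb) (negbTE vc).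
have F1 := negbTE ab; have F2 := negbTE ac; have F3 := negbTE bc.
have F4 := negbTE va; have F5 := negbTE vb; have F6 := negbTE vc.
have G1 : (b == a) = false by rewrite eq_sym.
have G2 : (c == a) = false by rewrite eq_sym.
have G3 : (c == b) = false by rewrite eq_sym.
have G4 : (v == a) = false by rewrite eq_sym.
have G5 : (v == b) = false by rewrite eq_sym.
have G6 : (v == c) = false by rewrite eq_sym.
constructor => //; rewrite ?inE ?eqxx ?orbT //.
- rewrite setU1K; first exact: c_bc.
  by rewrite !inE ?F1 ?F2 ?F3 ?F4 ?F5 ?F6 ?G1 ?G2 ?G3 ?G4 ?G5 ?G6.
- rewrite setUCA setU1K; first exact: c_ac.
  by rewrite !inE ?F1 ?F2 ?F3 ?F4 ?F5 ?F6 ?G1 ?G2 ?G3 ?G4 ?G5 ?G6.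
- rewrite [b |: (c |: _)]setUCA setUCA setU1K; first exact: c_ab.
  by rewrite !inE ?F1 ?F2 ?F3 ?F4 ?F5 ?F6 ?G1 ?G2 ?G3 ?G4 ?G5 ?G6.
Qed.


Lemma grow (T : finType) (e : rel T) :
  symmetric e -> connected_graph e ->
  (exists (U : {set T}) x1 x2 x3, #|U| = 4 /\ good3 e U x1 x2 x3) ->
  forall m, 4 <= m -> m <= #|T| ->
  exists (U : {set T}) x1 x2 x3, #|U| = m /\ good3 e U x1 x2 x3.
Proof.
move=> se cg base; elim => [|m IH] // h4 hm.
have [m4|m4] := eqVneq m.+1 4; first by rewrite m4.
have [U [x1 [x2 [x3 [cU g]]]]] := IH ltac:(lia) ltac:(lia).
have : 0 < #|~: U| by have := cardsC U; lia.
move=> /card_gt0P [y]; rewrite inE => yU.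
have [_ i1 _ _ _ _ _ _ _ _] := g.
have [u [w [uU wU euw]]] := boundary (cg x1 y) i1 yU.
have [y1 [y2 [y3 g']]] := good3_step se g wU uU euw.
exists (w |: U), y1, y2, y3; split => //.
by rewrite cardsU1 wU cU.
Qed.

Lemma three_nb (T : finType) (A : {set T}) :
  2 < #|A| -> exists a b c, [/\ a \in A, b \in A & c \in A] /\ [/\ a != b, a != c & b != c].
Proof.
move=> h.
have /card_gt0P [a aA] : 0 < #|A| by lia.
have h1 := cardsD1 a A; rewrite aA in h1.
have /card_gt0P [b bA] : 0 < #|A :\ a| by lia.
have h2 := cardsD1 b (A :\ a); rewrite bA in h2.
have /card_gt0P [c cA] : 0 < #|A :\ a :\ b| by lia.
move: bA cA; rewrite !inE => /andP [ba bA] /and3P [cb ca cA].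
by exists a, b, c; split; split => //; rewrite eq_sym.
Qed.

Lemma case_deg3 (T : finType) (e : rel T) (k : nat) v :
  simple_graph e -> connected_graph e -> 2 < degree e v ->
  2 <= k -> k < #|T| -> ~ CIS_graph_bipartite e k.
Proof.
move=> [se ir] cg dv hk hkT.
have [a [b [c [[ia ib ic] [ab ac bc]]]]] := three_nb dv.
rewrite !inE in ia ib ic.
have nv : forall w, e v w -> w != v.
  by move=> w ew; apply/eqP => E; rewrite E ir in ew.
have [k2|k3] := eqVneq k 2.
  rewrite k2.
  have v1 : v \in [set v] by rewrite inE.
  have cis : forall w, e v w -> is_CIS e 2 (w |: [set v]).
    move=> w ew; rewrite /is_CIS (conn_add se (conn1 e v) v1 ew) andbT.
    by rewrite cardsU1 cards1 inE (nv _ ew).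
  have ne : forall w w', w != w' -> w != v -> w |: [set v] != w' |: [set v].
    move=> w w' ww' wv; apply/negP => /eqP E.
    have : w \in w' |: [set v] by rewrite -E !inE eqxx.
    by rewrite !inE (negbTE ww') (negbTE wv).
  have it : forall w w', w != w' -> #|(w |: [set v]) :&: (w' |: [set v])| = 2.-1.
    move=> w w' ww'.
    suff -> : (w |: [set v]) :&: (w' |: [set v]) = [set v] by rewrite cards1.
    apply/setP => z; rewrite !inE.
    case: (z =P v) => [->|_]; first by rewrite !orbT.
    rewrite !orbF; case: (z =P w) => [->|] //=.
    by rewrite (negbTE ww').
  apply: (triangle (cis _ ia) (cis _ ib) (cis _ ic)); try exact: it;
    by apply: ne => //; apply: nv.
have k4 : 4 <= k.+1 by move: hk; rewrite leq_eqVlt eq_sym (negbTE k3).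
have [U [x1 [x2 [x3 [cU g]]]]] :=
  grow se cg (ex_intro _ (a |: (b |: (c |: [set v]))) (ex_intro _ a (ex_intro _ b (ex_intro _ c
    (good3_base se ir ia ib ic ab ac bc))))) k4 hkT.
exact: good3_tri cU g.
Qed.


Lemma windows (T : finType) (e : rel T) (k n : nat) (c : nat -> T) :
  symmetric e -> (forall i, c (i + n) = c i) ->
  (forall a b, c a = c b -> a = b %[mod n]) ->
  (forall i, e (c i) (c i.+1)) -> odd n -> 2 <= k -> k < n ->
  ~ CIS_graph_bipartite e k.
Proof.
move=> se per inj ed on hk hkn [f Hf].
pose W i := [set c (i + nat_of_ord t) | t : 'I_k].
have inW : forall i t, t < k -> c (i + t) \in W i.
  by move=> i t tk; apply/imsetP; exists (Ordinal tk).
have modsm : forall t1 t2, t1 < n -> t2 < n -> t1 = t2 %[mod n] -> t1 = t2.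
  by move=> t1 t2 h1 h2; rewrite !modn_small.
have injW : forall i t1 t2, t1 < n -> t2 < n -> c (i + t1) = c (i + t2) -> t1 = t2.
  move=> i t1 t2 h1 h2 E; apply: modsm => //; apply/eqP.
  by rewrite -(eqn_modDl i); apply/eqP; apply: inj.
have cardW : forall i, #|W i| = k.
  move=> i; rewrite card_imset ?card_ord //.
  move=> t1 t2 E; apply: val_inj; apply: (injW i) => //; exact: ltn_trans (ltn_ord _) hkn.
have sr : forall i, symmetric (induced_rel e (W i)) by move=> i; apply: induced_sym.
have cw : forall i t, t < k -> connect (induced_rel e (W i)) (c i) (c (i + t)).
  move=> i; elim => [|t IH] tk; first by rewrite addn0 connect0.
  apply: connect_trans (IH (ltnW tk)) _; apply: connect1.
  by rewrite /induced_rel inW ?inW // ?addnS ?ed //; lia.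
have cisW : forall i, is_CIS e k (W i).
  move=> i; rewrite /is_CIS cardW eqxx /=.
  apply/forall_inP => x /imsetP [t1 _ ->]; apply/forall_inP => y /imsetP [t2 _ ->].
  apply: connect_trans (cw i t2 (ltn_ord t2)).
  by rewrite (sym_connect_sym (sr i)); apply: cw.
have adj : forall i, CIS_adj e k (W i) (W i.+1).
  move=> i; rewrite /CIS_adj !cisW /=.
  have ciW : c i \in W i by rewrite -[X in c X]addn0 inW //; lia.
  have ciW' : c i \notin W i.+1.
    apply/imsetP => [[t _ E]]; have tk := ltn_ord t.
    have := injW i 0 t.+1 ltac:(lia) ltac:(lia).
    by rewrite addn0 addnS -addSn => /(_ E).
  have neq : W i != W i.+1 by apply/negP => /eqP E; rewrite -E ciW in ciW'.
  rewrite neq /=.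
  have sub : W i :\ c i \subset W i :&: W i.+1.
    apply/subsetP => z; rewrite !inE => /andP [nz /imsetP [t _ Ez]].
    rewrite Ez; apply/andP; split; first exact: inW (ltn_ord t).
    case: t Ez nz => [[|t] tk] /= Ez nz; first by rewrite Ez addn0 eqxx in nz.
    by rewrite addnS -addSn inW //; lia.
  have lo := subset_leq_card sub.
  have := cardsD1 (c i) (W i); rewrite ciW cardW => hc.
  have : W i :&: W i.+1 \proper W i.
    rewrite properEneq subsetIl andbT; apply/negP => /eqP E.
    have : c i \in W i :&: W i.+1 by rewrite E.
    by rewrite inE (negbTE ciW') andbF.
  move/proper_card; rewrite cardW => hi.
  apply/eqP; lia.
have alt : forall i, f (W i) = f (W 0) (+) odd i.
  elim => [|i IH]; first by rewrite addbF.
  have := Hf (W i) (W i.+1); rewrite !unfold_in /= !cisW adj => /(_ isT isT isT).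
  by rewrite IH /= addbN; case: (f (W i.+1)); case: (f (W 0) (+) odd i).
have WnW0 : W n = W 0.
  by apply: eq_imset => t; rewrite add0n addnC per.
by have := alt n; rewrite WnW0 on addbT; case: (f (W 0)).
Qed.


Definition hp (T : finType) (e : rel T) (x0 : T) (s : seq T) :=
  forall i, i.+1 < size s -> e (nth x0 s i) (nth x0 s i.+1).

Lemma extend (T : finType) (e : rel T) x0 (s : seq T) y :
  symmetric e -> connected_graph e -> (forall x, degree e x <= 2) ->
  uniq s -> 0 < size s -> hp e x0 s -> y \notin s ->
  exists s', [/\ uniq s', hp e x0 s' & size s' = (size s).+1].
Proof.
move=> se cg dg us ss hs ys.
have u0s : nth x0 s 0 \in [set x in s] by rewrite inE mem_nth.
have ysS : y \notin [set x in s] by rewrite inE.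
have [u [w []]] := boundary (cg (nth x0 s 0) y) u0s ysS.
rewrite !inE => us' ws euw.
set i := index u s.
have iu : nth x0 s i = u by rewrite nth_index.
have is_ : i < size s by rewrite index_mem.
have [il|il] := eqVneq i (size s).-1.
  exists (rcons s w); split; last by rewrite size_rcons.
  - by rewrite rcons_uniq ws us.
  - move=> j; rewrite size_rcons ltnS => hj; rewrite !nth_rcons.
    have [hj'|hj'] := ltnP j.+1 (size s).
      by rewrite (ltnW hj') hs.
    have ej : j.+1 = size s by lia.
    rewrite hj ej eqxx.
    have -> : j = i by lia.
    by rewrite iu.
have [i0|i0] := eqVneq i 0.
  exists (w :: s); split => //.
  - by rewrite /= ws us.
  - case => [|j] /= hj; first by rewrite -i0 iu se.
    exact: hs.
exfalso; have il' : @eq nat i (size s).-1 -> False by move=> E; move: il; rewrite E eqxx.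
have i0' : @eq nat i 0 -> False by move=> E; move: i0; rewrite E eqxx.
clear il i0; clearbody i.
have im1 : i.-1 < size s := leq_ltn_trans (leq_pred i) is_.
have ip1 : i.+1 < size s.
  by rewrite ltn_neqAle is_ andbT; apply/eqP => E; apply: il'; rewrite -E.
have h1 : e u (nth x0 s i.-1).
  rewrite se -iu; have := hs i.-1; rewrite prednK; first by apply.
  by rewrite lt0n; apply/eqP.
have h2 : e u (nth x0 s i.+1) by rewrite -iu; apply: hs.
have d12 : nth x0 s i.-1 != nth x0 s i.+1.
  by rewrite nth_uniq //; apply/eqP; lia.
have dw1 : nth x0 s i.-1 != w.
  by apply/eqP => E; rewrite -E mem_nth in ws.
have dw2 : nth x0 s i.+1 != w.
  by apply/eqP => E; rewrite -E mem_nth in ws.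
by have := deg3 h1 h2 euw d12 dw1 dw2; rewrite ltnNge dg.
Qed.

Lemma ham (T : finType) (e : rel T) (x0 : T) :
  symmetric e -> connected_graph e -> (forall x, degree e x <= 2) ->
  exists s, [/\ uniq s, hp e x0 s & forall x, x \in s].
Proof.
move=> se cg dg.
suff : forall m s, uniq s -> 0 < size s -> hp e x0 s -> #|T| - size s <= m ->
    exists s, [/\ uniq s, hp e x0 s & forall x, x \in s].
  by move/(_ (#|T|) [:: x0]); apply => //; rewrite leq_subr.
elim => [|m IH] s us ss hs hm.
  case: (boolP [forall x, x \in s]) => [/forallP|]; first by exists s.
  move/forallPn => [y ys].
  have [s' [us' _ ss']] := extend se cg dg us ss hs ys.
  exfalso; have h1 : #|s'| = size s' := card_uniqP us'; have h2 : #|s'| <= #|T| := max_card _.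
  have h3 : size s' = (size s).+1 := ss'; have h4 : #|T| - size s <= 0 := hm; lia.
case: (boolP [forall x, x \in s]) => [/forallP|]; first by exists s.
move/forallPn => [y ys].
have [s' [us' hs' ss']] := extend se cg dg us ss hs ys.
apply: (IH s') => //; first by rewrite ss'.
have h1 : #|s'| = size s' := card_uniqP us'; have h2 : #|s'| <= #|T| := max_card _.
have h3 : size s' = (size s).+1 := ss'; have h4 : #|T| - size s <= m.+1 := hm; lia.
Qed.


Lemma case2 (T : finType) (e : rel T) (k : nat) :
  simple_graph e -> connected_graph e -> ~ bipartite e ->
  (forall x, degree e x <= 2) -> 2 <= k -> k < #|T| -> ~ CIS_graph_bipartite e k.
Proof.
move=> [se ir] cg nb dg hk hkT.
have /card_gt0P [x0 _] : 0 < #|T| by lia.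
have [s [us hs alls]] := ham x0 se cg dg.
set n := size s.
have hn : #|T| = n.
  have h1 : #|s| = size s := card_uniqP us.
  have h2 : #|s| = size (enum T) := eq_cardT alls.
  by rewrite cardT -h2 h1.
have adj : forall i, i.+1 < n -> e (nth x0 s i) (nth x0 s i.+1) by [].
have no3 : forall m p q r, p < n -> q < n -> r < n -> p != q -> p != r -> q != r ->
    e (nth x0 s m) (nth x0 s p) -> e (nth x0 s m) (nth x0 s q) ->
    e (nth x0 s m) (nth x0 s r) -> False.
  move=> m p q r hp hq hr pq pr qr ep eq er.
  have := deg3 ep eq er; rewrite !nth_uniq // pq pr qr => /(_ isT isT isT).
  by rewrite ltnNge dg.
have chord : forall i j, i < j -> j < n -> e (nth x0 s i) (nth x0 s j) ->
    odd i = odd j -> i = 0 /\ j = n.-1.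
  move=> i j ij jn eij oij.
  have i2 : i.+2 <= j.
    rewrite ltn_neqAle ij andbT; apply/eqP => E.
    by move: oij; rewrite -E /= ; case: (odd i).
  have [i0|i0] := posnP i.
    split => //; apply/eqP; rewrite eqn_leq -ltnS prednK ?jn /=; last by lia.
    rewrite leqNgt; apply/negP => jn'.
    exfalso; apply: (no3 j j.-1 j.+1 0) => //; try (apply/eqP; lia); try lia.
    - rewrite se; have := adj j.-1; rewrite prednK; last by lia.
      by apply; lia.
    - by apply: adj; lia.
    - by rewrite se -i0.
  exfalso; apply: (no3 i i.-1 i.+1 j) => //; try (apply/eqP; lia); try lia.
  - rewrite se; have := adj i.-1; rewrite prednK; last by lia.
    by apply; lia.
  - by apply: adj; lia.
have n0 : 0 < n by lia.
case b: (odd n && e (nth x0 s n.-1) (nth x0 s 0)).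
  move/andP: b => [on ew].
  pose c i := nth x0 s (i %% n).
  apply: (@windows T e k n c se) => //.
  - by move=> i; rewrite /c modnDr.
  - move=> a b'; rewrite /c => /eqP; rewrite nth_uniq ?ltn_pmod //.
    by move/eqP.
  - move=> i; rewrite /c.
    have -> : i.+1 %% n = (i %% n).+1 %% n by rewrite -addn1 -modnDml addn1.
    have ri : i %% n < n by rewrite ltn_pmod.
    have [rn|rn] := ltnP (i %% n).+1 n.
      by rewrite (modn_small rn) adj.
    have E : (i %% n).+1 = n by lia.
    have E' : i %% n = n.-1 by lia.
    by rewrite E modnn E'.
  - by lia.
exfalso; apply: nb.
exists (fun x => odd (index x s)) => x y _ _ exy.
apply/negP => /eqP oxy.
have ix : index x s < n by rewrite index_mem.
have iy : index y s < n by rewrite index_mem.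
have nx : nth x0 s (index x s) = x by rewrite nth_index.
have ny : nth x0 s (index y s) = y by rewrite nth_index.
have fin : forall i j, i = 0 -> j = n.-1 -> odd i = odd j ->
    e (nth x0 s i) (nth x0 s j) -> False.
  move=> i j -> -> o0 eij.
  move: b; rewrite se eij andbT.
  have : odd n = ~~ odd n.-1 by rewrite -[in LHS](prednK n0).
  by rewrite -o0 /= => ->.
have [lt|lt|eqi] := ltngtP (index x s) (index y s).
- have [h1 h2] := chord _ _ lt iy ltac:(by rewrite nx ny) oxy.
  by apply: (fin _ _ h1 h2 oxy); rewrite nx ny.
- have [h1 h2] := chord _ _ lt ix ltac:(by rewrite nx ny se) (esym oxy).
  by apply: (fin _ _ h1 h2 (esym oxy)); rewrite nx ny se.
- by move: exy; rewrite -nx -ny eqi ir.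
Qed.


Theorem theorem2 (T : finType) (e : rel T) (k : nat) :
  simple_graph e ->
  connected_graph e ->
  (~ bipartite e \/ exists x : T, 2 < degree e x) ->
  2 <= k -> k < #|T| ->
  ~ CIS_graph_bipartite e k.
Proof.
move=> sg cg H hk hkT.
case: (boolP [exists x, 2 < degree e x]) => [/existsP [v dv]|].
  exact: case_deg3 sg cg dv hk hkT.
move/existsPn => nd.
have dg : forall x, degree e x <= 2 by move=> x; rewrite leqNgt nd.
case: H => [nb|[x dx]]; last by rewrite (negbTE (nd x)) in dx.
exact: case2 sg cg nb dg hk hkT.
Qed.
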